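(* Let $T^4=\mathbb{R}^4/\mathbb{Z}^{4}$, and let $G$ be a constant Riemannian metric and $B$ a constant real $2$-form on $T^4$ whose components $G_{IJ}$, $B_{IJ}$ in the standard coordinates are all rational numbers (i.e. the $\mathcal N=(1,1)$ SCFT with data $(T^4;G,B)$ is rational). Then there exists a constant complex structure $I$ on $T^4$ such that: $G$ is compatible with $I$; the complex torus $(T^4,I)$ is polarizable; and the cohomology class of $B$ has only a Hodge $(1,1)$ component with respect to $I$. In particular, $B$ lies in the algebraic part $H^2(T^4;\mathbb{Q})\cap H^{1,1}((T^4,I);\mathbb{R})$.
   Context: $T^4=\mathbb{R}^4/\mathbb{Z}^4$ with coordinates $X^1,\dots,X^4$, units normalized so that the lattice is $H_1(T^4;\mathbb{Z})=\mathbb{Z}^4$ and $2\pi\sqrt{\alpha'}=1$. $G=G_{IJ}dX^I\otimes dX^J$ with constant $G_{IJ}$, $B=\frac12 B_{IJ}dX^I\wedge dX^J$ with constant $B_{IJ}$. By the known classification, the $\mathcal N=(1,1)$ SCFT (nonlinear sigma model) for $(T^4;G,B)$ is rational iff all $G_{IJ},B_{IJ}\in\mathbb{Q}$. A constant complex structure $I$ ($I^2=-1$ on $\mathbb{R}^4$) is compatible with $G$ if $G(Iu,Iv)=G(u,v)$. The complex torus $(T^4,I)$ is polarizable if there is a class $\psi\in H^2(T^4;\mathbb{Z})\cap H^{1,1}$ such that $(u,v)\mapsto\psi(Iu,v)$ is positive definite on $H_1(T^4;\mathbb{R})$. Hodge types of classes in $H^2(T^4;\mathbb{C})$ are taken with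 respect to $I$. *)

(* Defs.v *)
(* Real vector space R^4 = H_1(T^4;R) with lattice Z^4 = the
   standard basis; vectors are column vectors 'cV[R]_4, bilinear forms
   (constant tensors on T^4) are 4x4 matrices M with b(u,v) = u^T M v. *)
From HB Require Import structures.
From mathcomp Require Import all_boot all_order all_algebra.
From mathcomp Require Import reals.
Set Implicit Arguments. Unset Strict Implicit. Unset Printing Implicit Defensive.
Import Order.TTheory GRing.Theory Num.Theory.
Local Open Scope ring_scope.

Section T4.
Variable R : realType.

Definition bform (M : 'M[R]_4) (u v : 'cV[R]_4) : R := (u^T *m M *m v) 0 0.

Definition posdef_bil (b : 'cV[R]_4 -> 'cV[R]_4 -> R) : Prop :=
  (forall u v, b u v = b v u) /\ (forall u, u != 0 -> 0 < b u u).

Definition is_metric (G : 'M[R]_4) : Prop := posdef_bil (bform G).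

(* constant real 2-form B = 1/2 B_IJ dX^I /\ dX^J, B(u,v) = u^T B v, B_IJ = -B_JI *)
Definition is_2form (B : 'M[R]_4) : Prop := B^T = - B.

Definition rational_mx (M : 'M[R]_4) : Prop :=
  forall i j, exists q : rat, M i j = ratr q.

(* integral class: integer values on pairs of lattice vectors *)
Definition integral_mx (M : 'M[R]_4) : Prop :=
  forall i j, exists z : int, M i j = z%:~R.

Definition complex_structure (I : 'M[R]_4) : Prop := I *m I = - 1%:M.

Definition compatible (G I : 'M[R]_4) : Prop :=
  forall u v, bform G (I *m u) (I *m v) = bform G u v.

(* a real (constant) 2-form W has only a Hodge (1,1) component w.r.t. I,
   i.e. its (2,0)+(0,2) part vanishes; for real forms this is
   W(Iu, Iv) = W(u, v). *)
Definition hodge11 (I W : 'M[R]_4) : Prop :=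
  forall u v, bform W (I *m u) (I *m v) = bform W u v.

Definition polarizable (I : 'M[R]_4) : Prop :=
  exists Psi : 'M[R]_4,
    [/\ is_2form Psi, integral_mx Psi, hodge11 I Psi &
        posdef_bil (fun u v => bform Psi (I *m u) v)].

End T4.

(* Main.v *)
Require Import Defs.
From HB Require Import structures.
From mathcomp Require Import all_boot all_order all_algebra.
From mathcomp Require Import reals.
From mathcomp Require Import ring lra.
Import Order.TTheory GRing.Theory Num.Theory.
Local Open Scope ring_scope.

Section Aux.
Variable R : realType.
Implicit Types (X Y Z : 'M[R]_4).

Definition mk4 (f : nat -> nat -> R) : 'M[R]_4 := \matrix_(i,j) f i j.
Lemma mk4M f g : mk4 f *m mk4 g = mk4 (fun i j => f i 0%N * g 0%N j + f i 1%N * g 1%N j + f i 2%N * g 2%N j + f i 3%N * g 3%N j).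
Proof. apply/matrixP => i j; rewrite !mxE !big_ord_recl big_ord0 !mxE /=. ring. Qed.
Lemma mk4D f g : mk4 f + mk4 g = mk4 (fun i j => f i j + g i j).
Proof. by apply/matrixP => i j; rewrite !mxE. Qed.
Lemma mk4N f : - mk4 f = mk4 (fun i j => - f i j).
Proof. by apply/matrixP => i j; rewrite !mxE. Qed.
Lemma mk4B f g : mk4 f - mk4 g = mk4 (fun i j => f i j - g i j).
Proof. by apply/matrixP => i j; rewrite !mxE. Qed.
Lemma mk4Z a f : a *: mk4 f = mk4 (fun i j => a * f i j).
Proof. by apply/matrixP => i j; rewrite !mxE. Qed.
Lemma mk4C a : a%:M = mk4 (fun i j => if i == j then a else 0).
Proof. apply/matrixP => i j; rewrite !mxE -[(nat_of_ord i == _)]/(i == j); by case: (i == j). Qed.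
Lemma mk4_0 : 0 = mk4 (fun _ _ => 0).
Proof. by apply/matrixP => i j; rewrite !mxE. Qed.
Lemma mk4_eq f g : (forall i j, (i<4)%N -> (j<4)%N -> f i j = g i j) -> mk4 f = mk4 g.
Proof. by move=> H; apply/matrixP => i j; rewrite !mxE H. Qed.
Lemma mk4T f : (mk4 f)^T = mk4 (fun i j => f j i).
Proof. by apply/matrixP => i j; rewrite !mxE. Qed.
Lemma mk4_id X : X = mk4 (fun i j => X (inord i) (inord j)).
Proof. by apply/matrixP => i j; rewrite !mxE !inord_val. Qed.

Ltac mk4_solve := apply: mk4_eq => -[|[|[|[|?]]]] [|[|[|[|?]]]] ? ? //;
  cbn -[GRing.add GRing.mul GRing.opp GRing.exp GRing.inv]; ring.

Definition skew6 (a b c d e f : R) : 'M[R]_4 := mk4 (fun i j =>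
  match i, j with
  | 0,1 => a | 1,0 => -a | 0,2 => b | 2,0 => -b | 0,3 => c | 3,0 => -c
  | 1,2 => d | 2,1 => -d | 1,3 => e | 3,1 => -e | 2,3 => f | 3,2 => -f
  | _,_ => 0%R end)%N.

Definition o0 : 'I_4 := inord 0.
Definition o1 : 'I_4 := inord 1.
Definition o2 : 'I_4 := inord 2.
Definition o3 : 'I_4 := inord 3.

Lemma mk4_o f : (mk4 f o0 o1 = f 0 1 /\ mk4 f o0 o2 = f 0 2 /\ mk4 f o0 o3 = f 0 3 /\
  mk4 f o1 o2 = f 1 2 /\ mk4 f o1 o3 = f 1 3 /\ mk4 f o2 o3 = f 2 3)%N.
Proof. by rewrite !mxE !inordK. Qed.

Lemma skew6E X : X^T = - X ->
  X = skew6 (X o0 o1) (X o0 o2) (X o0 o3) (X o1 o2) (X o1 o3) (X o2 o3).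
Proof.
move=> sk.
have H i j : X j i = - X i j.
  by have := congr1 (fun M : 'M[R]_4 => M i j) sk; rewrite !mxE.
have D i : X i i = 0 by have := H i i; lra.
rewrite {1}(mk4_id X) /skew6; apply: mk4_eq => -[|[|[|[|?]]]] [|[|[|[|?]]]] ? ? //=;
  rewrite ?D // H //.
Qed.

Definition sharp X := skew6 (X o2 o3) (-(X o1 o3)) (X o1 o2) (X o0 o3) (-(X o0 o2)) (X o0 o1).
Definition pf X := X o0 o1 * X o2 o3 - X o0 o2 * X o1 o3 + X o0 o3 * X o1 o2.
Definition nsq X := X o0 o1 ^+ 2 + X o0 o2 ^+ 2 + X o0 o3 ^+ 2 + X o1 o2 ^+ 2 + X o1 o3 ^+ 2 + X o2 o3 ^+ 2.

Lemma skew6_o a b c d e f : let X := skew6 a b c d e f in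
  X o0 o1 = a /\ X o0 o2 = b /\ X o0 o3 = c /\ X o1 o2 = d /\ X o1 o3 = e /\ X o2 o3 = f.
Proof. by rewrite /= /skew6 !mxE !inordK. Qed.

Lemma sharp6 a b c d e f : sharp (skew6 a b c d e f) = skew6 f (-e) d c (-b) a.
Proof. by rewrite /sharp; case: (skew6_o a b c d e f) => /= -> [] -> [] -> [] -> [] -> ->. Qed.
Lemma pf6 a b c d e f : pf (skew6 a b c d e f) = a * f - b * e + c * d.
Proof. by rewrite /pf; case: (skew6_o a b c d e f) => /= -> [] -> [] -> [] -> [] -> ->. Qed.
Lemma nsq6 a b c d e f : nsq (skew6 a b c d e f) = a^+2 + b^+2 + c^+2 + d^+2 + e^+2 + f^+2.
Proof. by rewrite /nsq; case: (skew6_o a b c d e f) => /= -> [] -> [] -> [] -> [] -> ->. Qed.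

Lemma skew6T a b c d e f : (skew6 a b c d e f)^T = - skew6 a b c d e f.
Proof. rewrite /skew6 mk4T mk4N; mk4_solve. Qed.

Lemma skew6_quart a b c d e f : let X := skew6 a b c d e f in
  X *m X *m X *m X + (a^+2+b^+2+c^+2+d^+2+e^+2+f^+2) *: (X *m X)
  + ((a*f - b*e + c*d)^+2)%:M = 0.
Proof. rewrite /= /skew6 !mk4M mk4Z mk4C !mk4D mk4_0; mk4_solve. Qed.

Lemma skew6_K2 a b c d e f t p : let X := skew6 a b c d e f in
  let K := X *m X *m X + (t + p) *: X in
  K *m K = (X *m X *m X *m X + t *: (X *m X) + (p^+2)%:M) *m (X *m X + (t + 2 * p)%:M)
           - (p^+2 * (t + 2 * p))%:M.
Proof. rewrite /= /skew6 !mk4M !mk4Z !mk4C !mk4D !mk4M mk4B; mk4_solve. Qed.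

Lemma skew6_KT a b c d e f k : let X := skew6 a b c d e f in
  (X *m X *m X + k *: X)^T = - (X *m X *m X + k *: X).
Proof. rewrite /= /skew6 !mk4M !mk4Z !mk4D mk4T mk4N; mk4_solve. Qed.

Lemma skew6_sharpM a b c d e f : let X := skew6 a b c d e f in
  X *m sharp X = (- (a * f - b * e + c * d))%:M /\ sharp X *m X = (- (a * f - b * e + c * d))%:M.
Proof. rewrite /= sharp6 /skew6 !mk4M !mk4C; split; mk4_solve. Qed.


Lemma vTvE (v : 'cV[R]_4) : (v^T *m v) 0 0 = \sum_k v k 0 ^+ 2.
Proof. by rewrite mxE; apply: eq_bigr => k _; rewrite mxE expr2. Qed.

Lemma vTv_ge0 (v : 'cV[R]_4) : 0 <= (v^T *m v) 0 0.
Proof. by rewrite vTvE; apply: sumr_ge0 => k _; exact: sqr_ge0. Qed.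

Lemma vTv_gt0 (v : 'cV[R]_4) : v != 0 -> 0 < (v^T *m v) 0 0.
Proof.
move=> vn.
have [k hk] : exists k, v k 0 != 0.
  have : [exists k, v k 0 != 0].
    apply: (contraNT _ vn) => /existsPn H; apply/eqP/matrixP => i j.
    by rewrite ord1 mxE; exact/eqP/negPn/H.
  by case/existsP => k hk; exists k.
rewrite vTvE (bigD1 k) //=; apply: ltr_pwDl.
  by rewrite exprn_even_gt0 //= hk.
by apply: sumr_ge0 => i _; exact: sqr_ge0.
Qed.

Lemma polar6 a b c d e f : (a*f - b*e + c*d) != 0 -> let X := skew6 a b c d e f in
 exists J : 'M[R]_4, [/\ J *m J = - 1%:M, J^T = - J,
   (forall Z, X *m Z = Z *m X -> J *m Z = Z *m J),
   (J^T *m X)^T = J^T *m X &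
   forall u : 'cV[R]_4, u != 0 -> 0 < (u^T *m (J^T *m X) *m u) 0 0].
Proof.
move=> hpf X.
set t := a^+2+b^+2+c^+2+d^+2+e^+2+f^+2.
set q := a*f - b*e + c*d.
set p := `|q|.
have p0 : 0 < p by rewrite normr_gt0.
have pq : p^+2 = q^+2 by rewrite real_normK // num_real.
have tp : 2 * p <= t.
  have h1 : 0 <= t - 2 * q.
    have -> : t - 2*q = (a-f)^+2 + (b+e)^+2 + (c-d)^+2 by rewrite /t /q; ring.
    by rewrite !addr_ge0 // sqr_ge0.
  have h2 : 0 <= t + 2 * q.
    have -> : t + 2*q = (a+f)^+2 + (b-e)^+2 + (c+d)^+2 by rewrite /t /q; ring.
    by rewrite !addr_ge0 // sqr_ge0.
  rewrite /p; have [hq|hq] := lerP 0 q; [rewrite ger0_norm // | rewrite ltr0_norm //]; lra.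
have tp2 : 0 < t + 2 * p by lra.
set s := Num.sqrt (t + 2 * p).
have s0 : 0 < s by rewrite sqrtr_gt0.
have ss : s^+2 = t + 2 * p by rewrite sqr_sqrtr // ltW.
have Q : X *m X *m X *m X + t *: (X *m X) + (p^+2)%:M = 0 by rewrite pq; exact: skew6_quart.
set K := X *m X *m X + (t + p) *: X.
have K2 : K *m K = (X *m X *m X *m X + t *: (X *m X) + (p^+2)%:M) *m (X *m X + (t + 2 * p)%:M)
           - (p^+2 * (t + 2 * p))%:M := skew6_K2 a b c d e f t p.
rewrite Q mul0mx sub0r in K2.
have KT : K^T = - K := skew6_KT a b c d e f (t + p).
set J := (p * s)^-1 *: K.
have JT : J^T = - J by rewrite /J linearZ /= KT scalerN.
have KX : K *m X = X *m X *m X *m X + (t + p) *: (X *m X) by rewrite /K mulmxDl -scalemxAl.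
have X4 : X *m X *m X *m X = - (t *: (X *m X)) - (p^+2)%:M.
  by move/eqP: Q; rewrite -addrA addr_eq0 => /eqP ->; rewrite opprD.
have ME : J^T *m X = s^-1 *: ((p)%:M - X *m X).
  rewrite JT mulNmx /J -scalemxAl KX X4.
  move: (X *m X) => Y; apply/matrixP => i j; rewrite !mxE; case: (i == j);
  rewrite ?mulr1n ?mulr0n; field; lra.
exists J; split.
- rewrite /J -scalemxAl -scalemxAr K2 scalerA scalerN scale_scalar_mx; congr (- _%:M).
  rewrite -ss; field; lra.
- exact: JT.
- move=> Z HZ; rewrite /J -scalemxAl -scalemxAr; congr (_ *: _).
  rewrite /K mulmxDl mulmxDr -scalemxAl -scalemxAr HZ; congr (_ + _).
  by rewrite -[X *m X *m X *m Z]mulmxA HZ mulmxA -[X *m X *m Z]mulmxA HZ mulmxA HZ !mulmxA.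
- by rewrite ME linearZ /= linearB /= tr_scalar_mx trmx_mul skew6T mulNmx mulmxN opprK.
- move=> u u0; rewrite ME.
  have E : u^T *m (p%:M - X *m X) *m u = p *: (u^T *m u) + (X *m u)^T *m (X *m u).
    rewrite mulmxBr mulmxBl mul_mx_scalar -scalemxAl; congr (_ + _).
    by rewrite trmx_mul skew6T mulmxN mulNmx !mulmxA.
  rewrite -scalemxAr -scalemxAl mxE E mxE [X in _ * (X + _)]mxE.
  apply: mulr_gt0; first by rewrite invr_gt0.
  by apply: ltr_wpDr; [exact: vTv_ge0 | apply: mulr_gt0 => //; exact: vTv_gt0].
Qed.


Lemma polar X : X^T = - X -> pf X != 0 ->
 exists J : 'M[R]_4, [/\ J *m J = - 1%:M, J^T = - J,
   (forall Z, X *m Z = Z *m X -> J *m Z = Z *m J),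
   (J^T *m X)^T = J^T *m X &
   forall u : 'cV[R]_4, u != 0 -> 0 < (u^T *m (J^T *m X) *m u) 0 0].
Proof.
move=> sk hpf.
have := @polar6 (X o0 o1) (X o0 o2) (X o0 o3) (X o1 o2) (X o1 o3) (X o2 o3) hpf.
by rewrite /= -(skew6E _ sk).
Qed.

Lemma sharpT X : (sharp X)^T = - sharp X.
Proof. by rewrite /sharp skew6T. Qed.

Lemma sharpM X : X^T = - X -> X *m sharp X = (- pf X)%:M /\ sharp X *m X = (- pf X)%:M.
Proof.
move=> sk.
have := skew6_sharpM (X o0 o1) (X o0 o2) (X o0 o3) (X o1 o2) (X o1 o3) (X o2 o3).
by rewrite /= -(skew6E _ sk).
Qed.

Lemma pf_shift X (m : R) : pf (X + m *: sharp X) = (1 + m^+2) * pf X + m * nsq X.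
Proof.
have E := skew6_o (X o2 o3) (-(X o1 o3)) (X o1 o2) (X o0 o3) (-(X o0 o2)) (X o0 o1).
rewrite /= -/(sharp X) in E.
case: E; move: (sharp X) => S e1 [e2 [e3 [e4 [e5 e6]]]].
rewrite /pf /nsq !mxE e1 e2 e3 e4 e5 e6.
ring.
Qed.

Lemma skew6_00 : skew6 0 0 0 0 0 0 = 0.
Proof. rewrite /skew6 [RHS]mk4_0; apply: mk4_eq => -[|[|[|[|?]]]] [|[|[|[|?]]]] ? ? //=; exact: oppr0. Qed.

Lemma nsq_gt0 X : X^T = - X -> X != 0 -> 0 < nsq X.
Proof.
move=> sk Xn0.
have ge : 0 <= nsq X by rewrite /nsq !addr_ge0 // sqr_ge0.
rewrite lt0r ge andbT; apply: contra Xn0 => h.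
move: h; rewrite /nsq !paddr_eq0 ?addr_ge0 ?sqr_ge0 // !sqrf_eq0.
case/andP => /andP [] /andP [] /andP [] /andP [] /eqP h1 /eqP h2 /eqP h3 /eqP h4 /eqP h5 /eqP h6.
by rewrite (skew6E _ sk) h1 h2 h3 h4 h5 h6 skew6_00.
Qed.

Lemma sharp_eq0 X : X^T = - X -> sharp X = 0 -> X = 0.
Proof.
move=> sk h.
have E := skew6_o (X o2 o3) (-(X o1 o3)) (X o1 o2) (X o0 o3) (-(X o0 o2)) (X o0 o1).
rewrite /= -/(sharp X) h !mxE in E.
case: E => e1 [e2 [e3 [e4 [e5 e6]]]].
have e2' : X o1 o3 = 0 by apply/eqP; rewrite -oppr_eq0 -e2.
have e5' : X o0 o2 = 0 by apply/eqP; rewrite -oppr_eq0 -e5.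
by rewrite (skew6E _ sk) -e1 e2' -e3 -e4 e5' -e6 skew6_00.
Qed.

Definition det4f (f : nat -> nat -> R) : R := 0 + f 0%N 0%N*f 1%N 1%N*f 2%N 2%N*f 3%N 3%N - f 0%N 0%N*f 1%N 1%N*f 2%N 3%N*f 3%N 2%N - f 0%N 0%N*f 1%N 2%N*f 2%N 1%N*f 3%N 3%N + f 0%N 0%N*f 1%N 2%N*f 2%N 3%N*f 3%N 1%N + f 0%N 0%N*f 1%N 3%N*f 2%N 1%N*f 3%N 2%N - f 0%N 0%N*f 1%N 3%N*f 2%N 2%N*f 3%N 1%N - f 0%N 1%N*f 1%N 0%N*f 2%N 2%N*f 3%N 3%N + f 0%N 1%N*f 1%N 0%N*f 2%N 3%N*f 3%N 2%N + f 0%N 1%N*f 1%N 2%N*f 2%N 0%N*f 3%N 3%N - f 0%N 1%N*f 1%N 2%N*f 2%N 3%N*f 3%N 0%N - f 0%N 1%N*f 1%N 3%N*f 2%N 0%N*f 3%N 2%N + f 0%N 1%N*f 1%N 3%N*f 2%N 2%N*f 3%N 0%N + f 0%N 2%N*f 1%N 0%N*f 2%N 1%N*f 3%N 3%N - f 0%N 2%N*f 1%N 0%N*f 2%N 3%N*f 3%N 1%N - f 0%N 2%N*f 1%N 1%N*f 2%N 0%N*f 3%N 3%N + f 0%N 2%N*f 1%N 1%N*f 2%N 3%N*f 3%N 0%N + f 0%N 2%N*f 1%N 3%N*f 2%N 0%N*f 3%N 1%N - f 0%N 2%N*f 1%N 3%N*f 2%N 1%N*f 3%N 0%N - f 0%N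 3%N*f 1%N 0%N*f 2%N 1%N*f 3%N 2%N + f 0%N 3%N*f 1%N 0%N*f 2%N 2%N*f 3%N 1%N + f 0%N 3%N*f 1%N 1%N*f 2%N 0%N*f 3%N 2%N - f 0%N 3%N*f 1%N 1%N*f 2%N 2%N*f 3%N 0%N - f 0%N 3%N*f 1%N 2%N*f 2%N 0%N*f 3%N 1%N + f 0%N 3%N*f 1%N 2%N*f 2%N 1%N*f 3%N 0%N.
Definition det4 (L : 'M[R]_4) := det4f (fun i j => L (inord i) (inord j)).

Lemma sharp_mk4 g : sharp (mk4 g) = skew6 (g 2%N 3%N) (-(g 1%N 3%N)) (g 1%N 2%N) (g 0%N 3%N) (-(g 0%N 2%N)) (g 0%N 1%N).
Proof. by rewrite /sharp !mxE !inordK. Qed.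

Lemma law6 (l : nat -> nat -> R) a b c d e f :
  mk4 l *m sharp ((mk4 l)^T *m skew6 a b c d e f *m mk4 l) *m (mk4 l)^T = det4f l *: sharp (skew6 a b c d e f).
Proof.
rewrite /det4f [X in _ = _ *: X]sharp_mk4 /skew6 !mk4T !mk4M !mxE ?inordK // mk4Z.
mk4_solve.
Qed.

Lemma law L B : B^T = - B -> L *m sharp (L^T *m B *m L) *m L^T = det4 L *: sharp B.
Proof.
move=> sk; rewrite /det4 (skew6E _ sk).
move: (fun i j => L (inord i) (inord j)) (mk4_id L) => l ->.
exact: law6.
Qed.

Lemma bform_entry (M A : 'M[R]_4) i j : (A^T *m M *m A) i j = bform M (col i A) (col j A).
Proof.
rewrite /bform !mxE; apply: eq_bigr => k _; rewrite !mxE; congr (_ * _).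
by apply: eq_bigr => l _; rewrite !mxE.
Qed.

Section GS.
Variable G : 'M[R]_4.
Local Notation g := (bform G).
Lemma gDl u v w : g (u + v) w = g u w + g v w.
Proof. by rewrite /bform linearD /= !mulmxDl mxE. Qed.
Lemma gDr u v w : g u (v + w) = g u v + g u w.
Proof. by rewrite /bform !mulmxDr mxE. Qed.
Lemma gZl a u w : g (a *: u) w = a * g u w.
Proof. by rewrite /bform linearZ /= -!scalemxAl mxE. Qed.
Lemma gZr a u w : g u (a *: w) = a * g u w.
Proof. by rewrite /bform -!scalemxAr mxE. Qed.
Lemma gNl u w : g (- u) w = - g u w.
Proof. by rewrite -scaleN1r gZl mulN1r. Qed.
Lemma gNr u w : g u (- w) = - g u w.
Proof. by rewrite -scaleN1r gZr mulN1r. Qed.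
Lemma gBl u v w : g (u - v) w = g u w - g v w.
Proof. by rewrite gDl gNl. Qed.
Lemma gBr u v w : g u (v - w) = g u v - g u w.
Proof. by rewrite gDr gNr. Qed.
End GS.

Definition ev (k : 'I_4) : 'cV[R]_4 := delta_mx k 0.

Lemma gs_orth (G : 'M[R]_4) : is_metric G -> exists w : nat -> 'cV[R]_4,
  (forall i, (i < 4)%N -> 0 < bform G (w i) (w i)) /\
  (forall i j, (i < 4)%N -> (j < 4)%N -> i != j -> bform G (w i) (w j) = 0).
Proof.
case=> hsym hpos.
pose pr u w := ((bform G) u w / (bform G) w w) *: w.
pose w0 := ev o0.
pose w1 := ev o1 - pr (ev o1) w0.
pose w2 := ev o2 - pr (ev o2) w0 - pr (ev o2) w1.
pose w3 := ev o3 - pr (ev o3) w0 - pr (ev o3) w1 - pr (ev o3) w2.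
have evE (k i : 'I_4) : ev k i 0 = (i == k)%:R by rewrite /ev mxE andbT.
have ne (a b : nat) : (a < 4)%N -> (b < 4)%N -> a != b -> ((inord a : 'I_4) == inord b) = false.
  by move=> ha hb hab; apply/negbTE; rewrite -val_eqE /= !inordK.
have n10 : o1 == o0 = false by exact: ne.
have n20 : o2 == o0 = false by exact: ne.
have n30 : o3 == o0 = false by exact: ne.
have n21 : o2 == o1 = false by exact: ne.
have n31 : o3 == o1 = false by exact: ne.
have n32 : o3 == o2 = false by exact: ne.
have prE u w i : pr u w i 0 = ((bform G) u w / (bform G) w w) * w i 0 by rewrite /pr mxE.
have w0e : [/\ w0 o0 0 = 1, w0 o1 0 = 0, w0 o2 0 = 0 & w0 o3 0 = 0].
  by rewrite /w0 !mxE ?eqxx ?n10 ?n20 ?n30 ?n21 ?n31 ?n32 /=.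
case: w0e => w00 w01 w02 w03.
have w1e : [/\ w1 o1 0 = 1, w1 o2 0 = 0 & w1 o3 0 = 0].
  by rewrite /w1 !mxE ?eqxx ?n10 ?n20 ?n30 ?n21 ?n31 ?n32 /=; split; ring.
case: w1e => w11 w12 w13.
have w2e : w2 o2 0 = 1 /\ w2 o3 0 = 0.
  by rewrite /w2 !mxE ?eqxx ?n10 ?n20 ?n30 ?n21 ?n31 ?n32 /=; split; ring.
case: w2e => w22 w23.
have w33 : w3 o3 0 = 1.
  by rewrite /w3 !mxE ?eqxx ?n10 ?n20 ?n30 ?n21 ?n31 ?n32 /=; ring.
have nz (w : 'cV[R]_4) k : w k 0 = 1 -> 0 < (bform G) w w.
  move=> h; apply: hpos; apply/eqP => w0'; move: h; rewrite w0' mxE => /eqP.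
  by rewrite eq_sym oner_eq0.
have p0 := nz _ _ w00; have p1 := nz _ _ w11; have p2 := nz _ _ w22; have p3 := nz _ _ w33.
have prl u w v : (bform G) (pr u w) v = ((bform G) u w / (bform G) w w) * (bform G) w v by rewrite /pr gZl.
have hlp (a b : R) : 0 < b -> a - a / b * b = 0.
  by move=> hb; rewrite divfK ?subrr // gt_eqF.
have k10 : (bform G) w1 w0 = 0 by rewrite /w1 gBl prl ?mulr0 ?subr0; exact: hlp.
have k01 : (bform G) w0 w1 = 0 by rewrite hsym.
have k20 : (bform G) w2 w0 = 0 by rewrite /w2 !gBl !prl k10 ?mulr0 ?subr0; exact: hlp.
have k02 : (bform G) w0 w2 = 0 by rewrite hsym.
have k21 : (bform G) w2 w1 = 0 by rewrite /w2 !gBl !prl k01 ?mulr0 ?subr0; exact: hlp.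
have k12 : (bform G) w1 w2 = 0 by rewrite hsym.
have k30 : (bform G) w3 w0 = 0 by rewrite /w3 !gBl !prl k10 k20 ?mulr0 ?subr0; exact: hlp.
have k03 : (bform G) w0 w3 = 0 by rewrite hsym.
have k31 : (bform G) w3 w1 = 0 by rewrite /w3 !gBl !prl k01 k21 ?mulr0 ?subr0; exact: hlp.
have k13 : (bform G) w1 w3 = 0 by rewrite hsym.
have k32 : (bform G) w3 w2 = 0 by rewrite /w3 !gBl !prl k02 k12 ?mulr0 ?subr0; exact: hlp.
have k23 : (bform G) w2 w3 = 0 by rewrite hsym.
have H4 i : (i < 4)%N -> i = 0%N \/ i = 1%N \/ i = 2%N \/ i = 3%N.
  by case: i => [|[|[|[|i]]]] hi; [left | right; left | right; right; left | right; right; right | ].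
exists (fun i => match i with 0 => w0 | 1 => w1 | 2 => w2 | _ => w3 end)%N; split.
  move=> i hi; case: (H4 i hi) => [->|[->|[->|->]]]; [exact: p0 | exact: p1 | exact: p2 | exact: p3].
move=> i j hi hj hij.
case: (H4 i hi) hij => [->|[->|[->|->]]]; case: (H4 j hj) => [->|[->|[->|->]]] => hij;
  [ by case/negP: hij | exact: k01 | exact: k02 | exact: k03
  | exact: k10 | by case/negP: hij | exact: k12 | exact: k13
  | exact: k20 | exact: k21 | by case/negP: hij | exact: k23
  | exact: k30 | exact: k31 | exact: k32 | by case/negP: hij ].
Qed.

Lemma gs (G : 'M[R]_4) : is_metric G -> exists L : 'M[R]_4, L^T *m G *m L = 1%:M.
Proof.
move=> hG; have [ww [hp ho]] := gs_orth _ hG.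
pose nrm w := (Num.sqrt (bform G w w))^-1 *: w.
have nn w : 0 < bform G w w -> bform G (nrm w) (nrm w) = 1.
  move=> h; rewrite /nrm gZl gZr mulrA -expr2 exprVn sqr_sqrtr ?ltW // mulVf //; lra.
have no w v : bform G w v = 0 -> bform G (nrm w) (nrm v) = 0.
  by move=> h; rewrite /nrm gZl gZr h !mulr0.
exists (\matrix_(i, j) nrm (ww j) i 0).
apply/matrixP => i j.
have colE k : col k (\matrix_(i, j) nrm (ww j) i 0) = nrm (ww k).
  by apply/matrixP => a b; rewrite !mxE ord1.
rewrite bform_entry !colE mxE.
have [->|nij] := eqVneq i j; first by rewrite nn //; exact: hp.
rewrite no //; apply: ho => //.
Qed.

Definition isQ (x : R) := exists q : rat, x = ratr q.
Lemma isQ0 : isQ 0. Proof. by exists 0; rewrite rmorph0. Qed.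
Lemma isQ1 : isQ 1. Proof. by exists 1; rewrite rmorph1. Qed.
Lemma isQD x y : isQ x -> isQ y -> isQ (x + y).
Proof. by move=> [a ->] [b ->]; exists (a + b); rewrite rmorphD. Qed.
Lemma isQN x : isQ x -> isQ (- x).
Proof. by move=> [a ->]; exists (- a); rewrite rmorphN. Qed.
Lemma isQM x y : isQ x -> isQ y -> isQ (x * y).
Proof. by move=> [a ->] [b ->]; exists (a * b); rewrite rmorphM. Qed.

Lemma ratmxD (A B : 'M[R]_4) : rational_mx A -> rational_mx B -> rational_mx (A + B).
Proof. by move=> hA hB i j; rewrite mxE; apply: isQD. Qed.
Lemma ratmxM (A B : 'M[R]_4) : rational_mx A -> rational_mx B -> rational_mx (A *m B).
Proof.
move=> hA hB i j; rewrite mxE; apply: (big_ind isQ) => //; first exact: isQ0.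
  exact: isQD.
by move=> k _; apply: isQM.
Qed.
Lemma ratmx_skew6 a b c d e f : isQ a -> isQ b -> isQ c -> isQ d -> isQ e -> isQ f ->
  @rational_mx R (skew6 a b c d e f).
Proof.
move=> ha hb hc hd he hf i j; rewrite /skew6 mxE.
case: i => [[|[|[|[|?]]]] ?] //; case: j => [[|[|[|[|?]]]] ?] //=;
  by [exact: isQ0 | apply: isQN].
Qed.
Lemma ratmx_sharp X : rational_mx X -> rational_mx (sharp X).
Proof. by move=> h; apply: ratmx_skew6; rewrite /isQ; try apply: isQN; apply: h. Qed.

Lemma seq_denom (s : seq R) : (forall x, x \in s -> isQ x) ->
  exists N : int, 0 < N /\ forall x, x \in s -> exists z : int, N%:~R * x = z%:~R.
Proof.
elim: s => [|x s IH] H.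
  by exists 1; split => // y; rewrite in_nil.
have [q ->] := H x (mem_head _ _).
have [N [N0 HN]] : exists N : int, 0 < N /\ forall y, y \in s -> exists z : int, N%:~R * y = z%:~R.
  by apply: IH => y ys; apply: H; rewrite in_cons ys orbT.
exists (N * denq q); split; first by rewrite mulr_gt0 // denq_gt0.
move=> y; rewrite in_cons => /orP [/eqP -> | ys].
  exists (N * numq q); rewrite !intrM -mulrA; congr (_ * _).
  by rewrite -[(numq q)%:~R]ratr_int numqE rmorphM rmorph_int mulrC.
have [z hz] := HN y ys; exists (z * denq q).
by rewrite !intrM mulrAC hz.
Qed.

Lemma ratmx_int (M : 'M[R]_4) : rational_mx M ->
  exists N : int, 0 < N /\ integral_mx (N%:~R *: M).
Proof.
move=> hM.
pose s := [seq M ij.1 ij.2 | ij <- enum {: 'I_4 * 'I_4}].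
have Hs x : x \in s -> isQ x by case/mapP => ij _ ->; exact: hM.
have [N [N0 HN]] := seq_denom _ Hs.
exists N; split => // i j; rewrite mxE; apply: HN.
by apply/mapP; exists (i, j); rewrite ?mem_enum.
Qed.

Lemma bform_ev (M : 'M[R]_4) i j : bform M (ev i) (ev j) = M i j.
Proof. by rewrite /bform /ev trmx_delta -rowE -colE !mxE. Qed.
Lemma bformE2 (M A : 'M[R]_4) u v : bform M (A *m u) (A *m v) = bform (A^T *m M *m A) u v.
Proof. by rewrite /bform trmx_mul !mulmxA. Qed.
Lemma bformE1 (M A : 'M[R]_4) u v : bform M (A *m u) v = bform (A^T *m M) u v.
Proof. by rewrite /bform trmx_mul !mulmxA. Qed.
Lemma bform_sym (M : 'M[R]_4) u v : M^T = M -> bform M u v = bform M v u.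
Proof.
move=> hM; rewrite /bform.
have -> : (u^T *m M *m v) 0 0 = ((u^T *m M *m v)^T) 0 0 by rewrite [RHS]mxE.
by rewrite !trmx_mul trmxK hM mulmxA.
Qed.

Definition J0 := skew6 1 0 0 0 0 1.
Lemma J0J0 : J0 *m J0 = - 1%:M.
Proof. rewrite /J0 /skew6 mk4M mk4C mk4N; mk4_solve. Qed.

Lemma main (G B : 'M[R]_4) : is_metric G -> is_2form B -> rational_mx G -> rational_mx B ->
  exists I : 'M[R]_4,
    [/\ complex_structure I, compatible G I, polarizable I & hodge11 I B].
Proof.
move=> hG hB rG rB.
have Gs : G^T = G.
  by apply/matrixP => i j; rewrite mxE -!bform_ev hG.1.
have [L hL] := gs _ hG.
have H1 : L *m (L^T *m G) = 1%:M by apply: mulmx1C; exact: hL.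
have H1' : L *m L^T *m G = 1%:M by rewrite -mulmxA.
have H2 : G *m L *m L^T = 1%:M.
  by have := congr1 trmx H1; rewrite !trmx_mul trmxK Gs trmx1 ?mulmxA.
have c1 (A : 'M[R]_4) : A *m L *m L^T *m G = A by rewrite -!mulmxA H1 mulmx1.
have c2 (A : 'M[R]_4) : A *m G *m L *m L^T = A by rewrite -!mulmxA [G *m _]mulmxA H2 mulmx1.
have c3 (A : 'M[R]_4) : A *m L^T *m G *m L = A by rewrite -!mulmxA [L^T *m _]mulmxA hL mulmx1.
have skewT (P : 'M[R]_4) : P^T = - P -> (L^T *m P *m L)^T = - (L^T *m P *m L).
  by move=> hP; rewrite !trmx_mul trmxK hP mulNmx mulmxN mulmxA.
set Z := L^T *m B *m L.
have Zs : Z^T = - Z := skewT _ hB.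
have [Psi [rP sP pfP cP]] : exists Psi : 'M[R]_4, [/\ rational_mx Psi, Psi^T = - Psi,
    pf (L^T *m Psi *m L) != 0 & (L^T *m Psi *m L) *m Z = Z *m (L^T *m Psi *m L)].
  have [pZ|pZ] := eqVneq (pf Z) 0; last by exists B; split.
  have [Z0|Zn0] := eqVneq Z 0.
    exists J0; split.
    - by apply: ratmx_skew6; by [exact: isQ0 | exact: isQ1].
    - exact: skew6T.
    - set X := L^T *m J0 *m L.
      have Xs : X^T = - X := skewT _ (skew6T _ _ _ _ _ _).
      pose Y := - (L^T *m G *m J0 *m (G *m L)).
      have XY : X *m Y = 1%:M.
        rewrite /X /Y mulmxN !mulmxA c1 -[L^T *m J0 *m J0]mulmxA J0J0 mulmxN mulmx1 !mulNmx opprK.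
        exact: hL.
      have YX : Y *m X = 1%:M by apply: mulmx1C.
      apply/negP => /eqP p0.
      have SX : sharp X = 0.
        by rewrite -[sharp X]mul1mx -YX -mulmxA (sharpM _ Xs).1 p0 oppr0 mul_mx_scalar scale0r.
      have X0 := sharp_eq0 _ Xs SX.
      move: XY; rewrite X0 mul0mx => /matrixP /(_ 0 0); rewrite !mxE eqxx mulr1n => /eqP.
      by rewrite eq_sym oner_eq0.
    - by rewrite Z0 mulmx0 mul0mx.
  have law1 := law L _ hB; rewrite -/Z in law1.
  set d := det4 L in law1.
  have d0 : d != 0.
    apply/negP => /eqP d0; move: law1; rewrite d0 scale0r => h.
    have : sharp Z = 0.
      have -> : sharp Z = L^T *m G *m (L *m sharp Z *m L^T) *m G *m L.
        by rewrite !mulmxA hL mul1mx c3.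
      by rewrite h mulmx0 !mul0mx.
    by move/(sharp_eq0 _ Zs)/eqP; rewrite (negbTE Zn0).
  have W : L^T *m (G *m sharp B *m G) *m L = d^-1 *: sharp Z.
    have SB : sharp B = d^-1 *: (L *m sharp Z *m L^T) by rewrite law1 scalerA mulVf // scale1r.
    rewrite SB -scalemxAr -scalemxAl -scalemxAr -scalemxAl; congr (_ *: _).
    by rewrite !mulmxA hL mul1mx c3.
  exists (B + G *m sharp B *m G); split.
  - apply: ratmxD => //; apply: ratmxM => //; apply: ratmxM => //; exact: ratmx_sharp.
  - by rewrite linearD /= !trmx_mul Gs hB sharpT mulNmx mulmxN mulmxA opprD.
  - rewrite mulmxDr mulmxDl W pf_shift pZ mulr0 add0r; apply: mulf_neq0.
      by rewrite invr_eq0.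
    by rewrite gt_eqF // nsq_gt0.
  - rewrite mulmxDr mulmxDl W mulmxDl mulmxDr -scalemxAl -scalemxAr.
    by rewrite (sharpM _ Zs).1 (sharpM _ Zs).2.
set X := L^T *m Psi *m L.
have Xs : X^T = - X := skewT _ sP.
have [J [JJ JT JC JS JP]] := polar _ Xs pfP.
have JZ : J *m Z = Z *m J by apply: JC.
have JX : J *m X = X *m J by apply: JC.
pose I := L *m J *m (L^T *m G).
have IT : I^T = - (G *m L *m J *m L^T).
  by rewrite /I !trmx_mul trmxK Gs JT mulNmx mulmxN !mulmxA.
have conj (K : 'M[R]_4) : K *m J = J *m K ->
    I^T *m (G *m L *m K *m L^T *m G) *m I = G *m L *m K *m L^T *m G.
  move=> hK; rewrite IT /I !mulNmx !mulmxA c3 c3.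
  by rewrite -[in LHS](mulmxA (G *m L)) -hK [in LHS]mulmxA -[in LHS](mulmxA (G *m L *m K)) JJ mulmxN mulmx1 !mulNmx opprK.
have PsiE : Psi = G *m L *m X *m L^T *m G.
  by rewrite /X !mulmxA H2 mul1mx c1.
have BE : B = G *m L *m Z *m L^T *m G.
  by rewrite /Z !mulmxA H2 mul1mx c1.
have IGI : I^T *m G *m I = G.
  have h1 : (1%:M : 'M[R]_4) *m J = J *m 1%:M by rewrite mul1mx mulmx1.
  have := conj _ h1.
  by rewrite mulmx1 H2 mul1mx.
exists I; split.
- rewrite /complex_structure /I !mulmxA c3 -[L *m J *m J]mulmxA JJ mulmxN mulmx1 mulNmx.
  by rewrite mulNmx H1'.
- by move=> u v; rewrite bformE2 IGI.
- have [N [N0 HN]] := ratmx_int _ rP.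
  exists (N%:~R *: Psi); split.
  + by rewrite /is_2form linearZ /= sP scalerN.
  + exact: HN.
  + move=> u v; rewrite bformE2; congr bform.
    rewrite -scalemxAr -scalemxAl; congr (_ *: _).
    by rewrite {1}PsiE conj // -PsiE.
  + have IP : I^T *m Psi = G *m L *m (J^T *m X) *m L^T *m G.
      by rewrite {1}PsiE IT mulNmx !mulmxA c3 JT mulmxN !mulNmx.
    split.
    * move=> u v; rewrite !bformE1; apply: bform_sym.
      rewrite -scalemxAr IP linearZ /=; congr (_ *: _).
      by move: (J^T *m X) JS => P hP; rewrite !trmx_mul !trmxK Gs hP !mulmxA.
    * move=> u u0; rewrite bformE1 -scalemxAr IP /bform -scalemxAr -scalemxAl mxE.
      apply: mulr_gt0; first by rewrite ltr0z.
      have -> : u^T *m (G *m L *m (J^T *m X) *m L^T *m G) *m u =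
                (L^T *m G *m u)^T *m (J^T *m X) *m (L^T *m G *m u).
        by rewrite !trmx_mul trmxK Gs !mulmxA.
      apply: JP; apply: contra u0 => /eqP w0.
      by rewrite -[u]mul1mx -H1 -mulmxA w0 mulmx0.
- move=> u v; rewrite bformE2; congr bform.
  by rewrite {1}BE conj // -BE.
Qed.
End Aux.

Theorem proposition3p4 (R : realType) (G B : 'M[R]_4) :
  is_metric G -> is_2form B -> rational_mx G -> rational_mx B ->
  exists I : 'M[R]_4,
    [/\ complex_structure I, compatible G I, polarizable I & hodge11 I B].
Proof. exact: main. Qed.
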